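(* Let $\mathfrak{A}[\tau]$ be a semi-associative topological partial *-algebra with multiplication core $\mathfrak{B}$. Then $\mathfrak{A}^+(\mathfrak{B})\subseteq\mathfrak{A}^+_{\rm top}\subseteq\mathfrak{A}^+_{\mathcal{M}}$ for every $\mathcal{M}\subseteq\mathcal{P}_{\mathfrak{B}}(\mathfrak{A})$.
   Context: A partial *-algebra is a complex vector space $\mathfrak{A}$ with conjugate-linear involution and distributive partial multiplication on $\Gamma\subset\mathfrak{A}\times\mathfrak{A}$ with $(x,y)\in\Gamma$ iff $(y^*,x^* )\in\Gamma$, then $(xy)^*=y^*x^*$; $L(y)=\{x:(x,y)\in\Gamma\}$, $R(x)=\{y:(x,y)\in\Gamma\}$; $R\mathfrak{A}$ is the set of universal right multipliers. Semi-associative: $y\in R(x)$ implies $yz\in R(x)$ and $(xy)z=x(yz)$ for all $z\in R\mathfrak{A}$. A topological partial *-algebra: Hausdorff locally convex topology $\tau$ such that each map $y\in R(x)\mapsto xy$ is closed. $\tau^*$ is given by seminorms $\max\{p(x),p(x^* )\}$. A multiplication core is a subspace $\mathfrak{B}\subseteq R\mathfrak{A}$ with: $e\in\mathfrak{B}$ if a unit $e$ exists; $\mathfrak{B}\mathfrak{B}\subseteq\mathfrak{B}$; $\mathfrak{B}$ $\tau^*$-dense; $x\mapsto xb$ $\tau$-continuous for $b\in\mathfrak{B}$; $b^*(xc)=(b^*x)c$. An ips-form with core $\mathfrak{B}$ is a positive sesquilinear form $\varphi$ on $\mathfrak{A}\times\mathfrak{A}$ with $\mathfrak{B}\subset R\mathfrak{A}$,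 $\{x+N_\varphi:x\in\mathfrak{B}\}$ dense in the completion of $\mathfrak{A}/N_\varphi$ ($N_\varphi=\{x:\varphi(x,x)=0\}$), $\varphi(xa,b)=\varphi(a,x^*b)$ ($x\in\mathfrak{A}$, $a,b\in\mathfrak{B}$) and $\varphi(x^*a,yb)=\varphi(a,(xy)b)$ ($x\in L(y)$, $a,b\in\mathfrak{B}$). $\mathcal{P}_{\mathfrak{B}}(\mathfrak{A})$ is the set of ips-forms with core $\mathfrak{B}$ that are $\tau$-continuous ($|\varphi(x,y)|\le p(x)p(y)$ for a continuous seminorm $p$). $\mathfrak{A}^+(\mathfrak{B})$ is the $\tau$-closure of $\{\sum_{k=1}^n x_k^*x_k:x_k\in\mathfrak{B},n\in\mathbb{N}\}$; $\mathfrak{A}^+_{\rm top}$ is the $\tau$-closure of $\{\sum_{k=1}^n x_k^*x_k:x_k\in R\mathfrak{A},n\in\mathbb{N}\}$; for $\mathcal{M}\subseteq\mathcal{P}_{\mathfrak{B}}(\mathfrak{A})$, $\mathfrak{A}^+_{\mathcal{M}}=\{x\in\mathfrak{A}:\varphi(xa,a)\ge0\ \forall\varphi\in\mathcal{M},a\in\mathfrak{B}\}$. *)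

(* Defs.v *)
From mathcomp Require Import all_boot all_algebra.
From mathcomp Require Import reals.
From mathcomp.real_closed Require Import complex.
Set Implicit Arguments. Unset Strict Implicit. Unset Printing Implicit Defensive.
Import GRing.Theory Num.Theory.
Local Open Scope ring_scope.
Local Open Scope complex_scope.

Section PartialStarAlgebras.
Variable R : realType.
Local Notation C := R[i].
Variable A : lmodType C.
(* involution, domain Gamma of the partial multiplication, multiplication
   (a total function, only meaningful on Gamma) *)
Variable star : A -> A.
Variable Gam : A -> A -> Prop.
Variable mul : A -> A -> A.

Definition partial_star_algebra : Prop :=
  [/\ (forall x, star (star x) = x) /\
      (forall (a : C) x y, star (a *: x + y) = a^* *: star x + star y),
      (forall x y, Gam x y <-> Gam (star y) (star x)),
      (forall x y1 y2 (a b : C), Gam x y1 -> Gam x y2 ->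
          Gam x (a *: y1 + b *: y2) /\
          mul x (a *: y1 + b *: y2) = a *: mul x y1 + b *: mul x y2),
      (forall x1 x2 y (a b : C), Gam x1 y -> Gam x2 y ->
          Gam (a *: x1 + b *: x2) y /\
          mul (a *: x1 + b *: x2) y = a *: mul x1 y + b *: mul x2 y)
    & (forall x y, Gam x y -> star (mul x y) = mul (star y) (star x))].

Definition Lmul (y : A) : A -> Prop := fun x => Gam x y.
Definition Rmul (x : A) : A -> Prop := fun y => Gam x y.
Definition RA (y : A) : Prop := forall x, Gam x y.

Definition semi_associative : Prop :=
  forall x y z, Rmul x y -> RA z ->
    Rmul x (mul y z) /\ mul (mul x y) z = mul x (mul y z).

Definition seminorm (p : A -> R) : Prop :=
  (forall x y, p (x + y) <= p x + p y) /\
  (forall (a : C) x, (p (a *: x))%:C = `|a| * (p x)%:C).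

(* The locally convex topology tau is given by a family P of seminorms. *)
Definition hausdorff_lc (P : (A -> R) -> Prop) : Prop :=
  (forall p, P p -> seminorm p) /\
  (forall x, (forall p, P p -> p x = 0) -> x = 0).

Definition nbhd (P : (A -> R) -> Prop) (x : A) (U : A -> Prop) : Prop :=
  exists n (ps : 'I_n -> A -> R) (e : R),
    [/\ (forall i, P (ps i)), 0 < e &
        forall y, (forall i, ps i (y - x) < e) -> U y].

Definition tclosure (P : (A -> R) -> Prop) (S : A -> Prop) (x : A) : Prop :=
  forall U, nbhd P x U -> exists y, S y /\ U y.

Definition tcontinuous (P : (A -> R) -> Prop) (f : A -> A) : Prop :=
  forall x V, nbhd P (f x) V -> exists U, nbhd P x U /\ forall y, U y -> V (f y).

Definition cont_seminorm (P : (A -> R) -> Prop) (p : A -> R) : Prop :=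
  seminorm p /\
  forall x (e : R), 0 < e ->
    exists U, nbhd P x U /\ forall y, U y -> `|p y - p x| < e.

Definition tstar (P : (A -> R) -> Prop) : (A -> R) -> Prop :=
  fun q => exists p, P p /\ q = (fun x => Num.max (p x) (p (star x))).

(* the map y \in R(x) |-> xy is closed (its graph is closed in A x A) *)
Definition closed_left_mult (P : (A -> R) -> Prop) : Prop :=
  forall x y z,
    (forall U V, nbhd P y U -> nbhd P z V ->
       exists y', [/\ Rmul x y', U y' & V (mul x y')]) ->
    Rmul x y /\ z = mul x y.

Definition topological_psa (P : (A -> R) -> Prop) : Prop :=
  [/\ partial_star_algebra, hausdorff_lc P & closed_left_mult P].

Definition is_unit (e : A) : Prop :=
  forall x, [/\ Gam e x, Gam x e, mul e x = x & mul x e = x].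

Definition subspace (B : A -> Prop) : Prop :=
  B 0 /\ forall (a : C) x y, B x -> B y -> B (a *: x + y).

Definition multiplication_core (P : (A -> R) -> Prop) (B : A -> Prop) : Prop :=
  [/\ subspace B /\ (forall b, B b -> RA b),
      (forall e, is_unit e -> B e) /\
      (forall b c, B b -> B c -> B (mul b c)),
      (forall x, tclosure (tstar P) B x),
      (forall b, B b -> tcontinuous P (fun x => mul x b)) &
      (forall b c x, B b -> B c ->
          mul (star b) (mul x c) = mul (mul (star b) x) c)].

Definition pos_sesq (phi : A -> A -> C) : Prop :=
  [/\ (forall (a : C) x y z, phi (a *: x + y) z = a * phi x z + phi y z),
      (forall (a : C) x y z, phi x (a *: y + z) = a^* * phi x y + phi x z) &
      (forall x, 0 <= phi x x)].

(* ips-form with core B.  Density of B + N_phi in the completion of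
   A / N_phi is written out: every x is approximated by elements of B in the
   seminorm x |-> phi(x,x)^(1/2). *)
Definition ips_form (B : A -> Prop) (phi : A -> A -> C) : Prop :=
  [/\ pos_sesq phi,
      (forall b, B b -> RA b),
      (forall x (e : R), 0 < e -> exists b, B b /\ phi (x - b) (x - b) < e%:C),
      (forall x a b, B a -> B b -> phi (mul x a) b = phi a (mul (star x) b)) &
      (forall x y a b, Lmul y x -> B a -> B b ->
          phi (mul (star x) a) (mul y b) = phi a (mul (mul x y) b))].

Definition PB (P : (A -> R) -> Prop) (B : A -> Prop) (phi : A -> A -> C) : Prop :=
  ips_form B phi /\
  exists p, cont_seminorm P p /\
    forall x y, `|phi x y| <= (p x * p y)%:C.

Definition sos (S : A -> Prop) (y : A) : Prop :=
  exists s : seq A, (forall x, x \in s -> S x) /\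
    y = \sum_(x <- s) mul (star x) x.

Definition Aplus_core (P : (A -> R) -> Prop) (B : A -> Prop) : A -> Prop :=
  tclosure P (sos B).
Definition Aplus_top (P : (A -> R) -> Prop) : A -> Prop :=
  tclosure P (sos RA).
Definition Aplus_M (B : A -> Prop) (M : (A -> A -> C) -> Prop) (x : A) : Prop :=
  forall phi, M phi -> forall a, B a -> 0 <= phi (mul x a) a.

End PartialStarAlgebras.

(* Main.v *)
Require Import Defs.
From mathcomp Require Import all_boot all_order all_algebra.
From mathcomp Require Import reals.
From mathcomp.real_closed Require Import complex.
From mathcomp Require Import lra.
Import Order.TTheory GRing.Theory Num.Theory.
Local Open Scope ring_scope.
Local Open Scope complex_scope.

Lemma closed_nonneg (R : realType) (c : R[i]) :
  (forall e : R, 0 < e -> exists z : R[i], 0 <= z /\ `|z - c| < e%:C) -> 0 <= c.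
Proof.
case: c => a b H; rewrite lecE /=.
have [Hi|Hi] := eqVneq b 0.
  rewrite /= leNgt; apply/negP => Hr.
  have [[x y] [z0 Hz]] := H (- a) ltac:(by rewrite oppr_gt0).
  move: z0 Hz; rewrite lecE /= => /andP[/eqP y0 Hz0].
  rewrite normc_def ltcR /= => Hz.
  have h : `|x - a| <= Num.sqrt ((x - a)^+2 + (y - b)^+2).
    by rewrite -sqrtr_sqr ler_sqrt ?addr_ge0 ?sqr_ge0 // lerDl sqr_ge0.
  have := le_lt_trans h Hz.
  rewrite ltNge; apply/negP/negPn.
  apply: le_trans (ler_norm _); lra.
have [[x y] [z0 Hz]] := H (`|b|) ltac:(by rewrite normr_gt0).
move: z0 Hz; rewrite lecE /= => /andP[/eqP y0 Hz0].
rewrite normc_def ltcR /= => Hz.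
have h : `|y - b| <= Num.sqrt ((x - a)^+2 + (y - b)^+2).
  by rewrite -sqrtr_sqr ler_sqrt ?addr_ge0 ?sqr_ge0 // lerDr sqr_ge0.
have := le_lt_trans h Hz; rewrite y0 sub0r normrN ltxx //.
Qed.

Theorem proposition5p7 (R : realType) (A : lmodType R[i])
  (star : A -> A) (Gam : A -> A -> Prop) (mul : A -> A -> A)
  (P : (A -> R) -> Prop) (B : A -> Prop)
  (M : (A -> A -> R[i]) -> Prop) :
  topological_psa star Gam mul P ->
  semi_associative Gam mul ->
  multiplication_core star Gam mul P B ->
  (forall phi, M phi -> PB star Gam mul P B phi) ->
  (forall x, Aplus_core star mul P B x -> Aplus_top star Gam mul P x) /\
  (forall x, Aplus_top star Gam mul P x -> Aplus_M mul B M x).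
Proof.
move=> [[[starK starL] Gsym Dl Dr starM] Hlc Hcl] _ [[Bsub BRA] _ _ Bcont _] HM.
split.
  move=> x Hx U HU; have [y [[s [Hs ->]] Uy]] := Hx U HU.
  exists (\sum_(z <- s) mul (star z) z); split => //.
  by exists s; split => // z /Hs /BRA.
move=> x Hx phi Mphi a Ba.
have RAa := BRA a Ba.
have [[[s1 s2 spos] _ _ Hf4 Hf5] [p [[[ptri phom] pcont] pbnd]]] := HM phi Mphi.
have mulDl : forall u v, mul (u + v) a = mul u a + mul v a.
  move=> u v; have [_ ] := Dr u v a 1 1 (RAa u) (RAa v).
  by rewrite !scale1r.
have mul0l : mul 0 a = 0.
  have [_ ] := Dr 0 0 a 0 0 (RAa 0) (RAa 0).
  by rewrite !scale0r addr0.
have phiD : forall u v z, phi (u + v) z = phi u z + phi v z.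
  by move=> u v z; have := s1 1 u v z; rewrite scale1r mul1r.
have phiB : forall u v z, phi (u - v) z = phi u z - phi v z.
  by move=> u v z; rewrite addrC -scaleN1r s1 mulN1r addrC.
have phi0 : forall z, phi 0 z = 0.
  move=> z; have := s1 (-1) 0 0 z.
  by rewrite scaleN1r oppr0 addr0 mulN1r addNr.
have pos : forall y, sos star mul (RA Gam) y -> 0 <= phi (mul y a) a.
  move=> y [s [Hs ->]]; elim: s Hs => [|z s IH] Hs.
    by rewrite big_nil mul0l phi0.
  rewrite big_cons mulDl phiD addr_ge0 //; last first.
    by apply: IH => w ws; apply: (Hs w); rewrite in_cons ws orbT.
  have RAz : RA Gam z := Hs z (mem_head z s).
  rewrite Hf4 // starM; last exact: RAz.
  rewrite starK -(Hf5 (star z) z a a (RAz _) Ba Ba).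
  by rewrite starK spos.
have p0 : p 0 = 0.
  have := phom 0 0; rewrite scale0r normr0 mul0r.
  by case.
have pN : forall w, p (- w) = p w.
  move=> w; have := phom (-1) w; rewrite scaleN1r normrN normr1 mul1r.
  by case.
have pge0 : forall w, 0 <= p w.
  move=> w; have := ptri w (- w); rewrite subrr p0 pN; lra.
apply: closed_nonneg => e e0.
pose d := e / (p a + 1).
have d0 : 0 < d by rewrite divr_gt0 // ltr_wpDl // pge0.
have [U0 [[n [ps [ee [Pps ee0 HU0]]]] HU0d]] := pcont 0 d d0.
pose V w := U0 (w - mul x a).
have nV : nbhd P (mul x a) V.
  exists n, ps, ee; split => // y Hy; apply: HU0 => i; rewrite subr0; exact: Hy.
have [U [nU HUV]] := Bcont a Ba x V nV.
have [y [Sy Uy]] := Hx U nU.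
exists (phi (mul y a) a); split; first exact: pos.
have Hd : p (mul y a - mul x a) < d.
  have := HU0d _ (HUV y Uy); rewrite p0 subr0.
  by move/(le_lt_trans (ler_norm _)).
rewrite -phiB; apply: le_lt_trans (pbnd _ _) _.
rewrite ltcR.
have pa := pge0 a.
apply: (@le_lt_trans _ _ (d * p a)).
  by rewrite ler_wpM2r // ltW.
rewrite /d mulrAC ltr_pdivrMr ?ltr_wpDl // ltr_pM2l // ltrDl ltr01 //.
Qed.
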